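(* Consider the asynchronous multi-channel network model described in the context, running Algorithm 1 with frame length $L$, and assume the maximum clock drift rate satisfies $\delta \le \frac{1}{7}$. Then for every frame $f$ of any node and every other node $u$, the number of frames of $u$ that overlap $f$ in real time is at most $3$.
   Context: Each node $u$ has a clock $C_u$ (a function of real time) such that for all real times $t$ and all $\Delta t \ge 0$, $(1-\delta)\Delta t \le C_u(t+\Delta t) - C_u(t) \le (1+\delta)\Delta t$, where $0 \le \delta < 1$ is the maximum drift rate; clocks of different nodes may have arbitrary offsets. In Algorithm 1, each node, from the moment it starts (at an arbitrary real time), partitions its local time into consecutive frames each of length $L$ as measured by its own clock (the $k$-th frame occupies the real-time interval during which its clock reads values in $[C^{0}+(k-1)L,\, C^{0}+kL)$, where $C^0$ is its clock value at start), and each frame into three consecutive slots of local length $L/3$. Frames are regarded as real-time intervals; two frames overlap if these intervals intersect. *)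

(* Defs.v *)
From Stdlib Require Import Reals List.
Open Scope R_scope.

Definition drift_bounded (delta : R) (C : R -> R) : Prop :=
  forall t dt : R, 0 <= dt ->
    (1 - delta) * dt <= C (t + dt) - C t <= (1 + delta) * dt.

(* Real time t lies in the k-th frame (k >= 1) of a node with clock C,
   started at real time t0 (so C^0 = C t0), frame length L:
   C^0 + (k-1) L <= C t < C^0 + k L. *)
Definition in_frame (C : R -> R) (t0 L : R) (k : nat) (t : R) : Prop :=
  C t0 + (INR k - 1) * L <= C t < C t0 + INR k * L.

Definition frames_overlap (Cv : R -> R) (tv : R) (k : nat)
                          (Cu : R -> R) (tu : R) (j : nat) (L : R) : Prop :=
  exists t : R, in_frame Cv tv L k t /\ in_frame Cu tu L j t.

(* Main.v *)
Require Import Defs.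
From Stdlib Require Import Reals List Lra Lia Psatz.
Open Scope R_scope.

Lemma key (delta L : R) (Cv Cu : R -> R) (tv tu : R) (k j1 j2 : nat) (t1 t2 : R) :
  0 <= delta -> delta <= 1/7 -> 0 < L ->
  drift_bounded delta Cv -> drift_bounded delta Cu ->
  in_frame Cv tv L k t1 -> in_frame Cu tu L j1 t1 ->
  in_frame Cv tv L k t2 -> in_frame Cu tu L j2 t2 ->
  (j2 <= j1 + 2)%nat.
Proof.
  intros d0 d1 HL Dv Du [a1 b1] [c1 e1] [a2 b2] [c2 e2].
  destruct (Nat.le_gt_cases j2 (j1 + 2)) as [h|h]; [exact h|exfalso].
  assert (Hj : INR j1 + 3 <= INR j2).
  { replace 3 with (INR 3) by (simpl; ring). rewrite <- plus_INR.
    apply le_INR. lia. }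
  assert (Hd : Cu t2 - Cu t1 > 2 * L) by nra.
  destruct (Rle_lt_dec t1 t2) as [h12|h12].
  - destruct (Dv t1 (t2 - t1)) as [v1 v2]; [lra|].
    destruct (Du t1 (t2 - t1)) as [u1 u2]; [lra|].
    replace (t1 + (t2 - t1)) with t2 in * by ring.
    assert (Hk : (1 + delta) * (t2 - t1) <= 4/3 * ((1 - delta) * (t2 - t1))) by nra.
    lra.
  - destruct (Du t2 (t1 - t2)) as [u1 u2]; [lra|].
    replace (t2 + (t1 - t2)) with t1 in * by ring.
    assert (0 <= (1 - delta) * (t1 - t2)) by nra.
    nra.
Qed.

Lemma min_exists (s : list nat) : s <> nil ->
  exists m, In m s /\ forall j, In j s -> (m <= j)%nat.
Proof.
  induction s as [|a s IH]; intros H; [congruence|].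
  destruct s as [|b s'].
  - exists a. split; [left; auto|]. intros j [->|[]]; lia.
  - destruct IH as [m [Hm Hmin]]; [discriminate|].
    destruct (Nat.le_gt_cases a m).
    + exists a. split; [left; auto|]. intros j [->|Hj]; [lia|].
      specialize (Hmin j Hj); lia.
    + exists m. split; [right; auto|]. intros j [->|Hj]; [lia|auto].
Qed.

Theorem mainTheorem1 :
  forall (Node : Type) (C : Node -> R -> R) (start : Node -> R) (delta L : R),
    0 <= delta -> delta <= 1 / 7 -> 0 < L ->
    (forall w : Node, drift_bounded delta (C w)) ->
    forall (v : Node) (k : nat), (1 <= k)%nat ->
    forall u : Node, u <> v ->
    forall s : list nat, NoDup s ->
      (forall j : nat, In j s ->
         (1 <= j)%nat /\ frames_overlap (C v) (start v) k (C u) (start u) j L) ->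
      (length s <= 3)%nat.
Proof.
  intros Node C start delta L d0 d1 HL D v k Hk u Huv s Hnd Hs.
  destruct s as [|a s']; [simpl; lia|].
  destruct (min_exists (a :: s')) as [m [Hm Hmin]]; [discriminate|].
  assert (Hincl : incl (a :: s') (seq m 3)).
  { intros j Hj. apply in_seq.
    destruct (Hs j Hj) as [_ [t2 [A2 B2]]].
    destruct (Hs m Hm) as [_ [t1 [A1 B1]]].
    pose proof (key delta L (C v) (C u) (start v) (start u) k m j t1 t2
                  d0 d1 HL (D v) (D u) A1 B1 A2 B2).
    specialize (Hmin j Hj). lia. }
  pose proof (NoDup_incl_length Hnd Hincl). rewrite length_seq in H. exact H.
Qed.
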